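(* Let $\psi:[0,\infty)\to[0,\infty)$ be increasing with $\psi(x)/x\to\infty$ as $x\to\infty$. Let $\mathcal Z\subset\mathbb R^q$ and let $f=u-l:\mathcal Z\to[0,\infty)$ be continuous with $f(z)\to\infty$ as $|z|\to\infty$ and $\psi(f)\in\mathcal L_\tau(P^\star)$. Then $f\in\mathcal M_\tau(P^\star)$, and for every $\varepsilon>0$ and every $Q\in\mathcal Q$ there is a compact $C\subset\mathcal Z$ with $Q\big(f\mathbb 1_{C^c}\big)<\varepsilon$.
   Context: $P^\star$ is a probability measure on $\mathcal Z\subset\mathbb R^q$. $\tau(s)=e^{|s|}-|s|-1$; $\mathcal L_\tau(P^\star)=\{g:\exists a>0,\ P^\star\tau(g/a)<\infty\}$ and $\mathcal M_\tau(P^\star)=\{g:\forall a>0,\ P^\star\tau(g/a)<\infty\}$; $\mathcal L_\tau(P^\star)$ is a Banach space for $\|g\|_\tau=\inf\{a>0:P^\star\tau(g/a)\le1\}$ with topological dual $\mathcal L'_\tau(P^\star)$. $\mathcal P=\{p^{-1}\sum_{i=1}^p\delta_{z_i}:p\ge1,z_i\in\mathcal Z\}$; $\mathcal Q=\{Q\in\mathcal L'_\tau(P^\star):Q\ge0,\ Q1=1\}\cup\mathcal P$; $Qg$ denotes the action of $Q$ on $g$ (integration for elements of $\mathcal P$). *)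

(* Defs.v *)
From HB Require Import structures.
From mathcomp Require Import all_boot all_order all_algebra.
From mathcomp Require Import all_classical all_reals all_analysis.
Set Implicit Arguments. Unset Strict Implicit. Unset Printing Implicit Defensive.
Import Order.TTheory GRing.Theory Num.Theory.
Import numFieldNormedType.Exports.
Local Open Scope classical_set_scope.
Local Open Scope ring_scope.

(* R^q with its Borel sigma-algebra (generated by the open sets of the
   normed space 'rV[R]_q).  Definitionally equal to 'rV[R]_q. *)
Definition borelRq (R : realType) (q : nat) :=
  g_sigma_algebraType (@open 'rV[R]_q).

Definition tau (R : realType) (s : R) : R := expR `|s| - `|s| - 1.

Section Orlicz.
Variables (R : realType) (q : nat) (Z : set 'rV[R]_q)
  (Pstar : probability (borelRq R q) R).

(* Pstar tau(g / a), an extended real, integrating over Z (Pstar lives on Z) *)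
Definition Ptau (g : 'rV[R]_q -> R) (a : R) : \bar R :=
  (\int[Pstar]_(x in (Z : set (borelRq R q))) (tau (g x / a))%:E)%E.

Definition meas (g : 'rV[R]_q -> R) : Prop :=
  @measurable_fun _ _ (borelRq R q) R Z g.

Definition Ltau (g : 'rV[R]_q -> R) : Prop :=
  meas g /\ exists a : R, 0 < a /\ (Ptau g a < +oo)%E.

Definition Mtau (g : 'rV[R]_q -> R) : Prop :=
  meas g /\ forall a : R, 0 < a -> (Ptau g a < +oo)%E.

Definition tau_norm (g : 'rV[R]_q -> R) : R :=
  inf [set a : R | 0 < a /\ (Ptau g a <= 1)%E].

(* Q is (the action of) an element of the topological dual L'_tau(Pstar):
   a linear functional on L_tau(Pstar), bounded for ||.||_tau. *)
Definition in_dual (Q : ('rV[R]_q -> R) -> R) : Prop :=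
  (forall g h a b, Ltau g -> Ltau h ->
     Q (fun x => a * g x + b * h x) = a * Q g + b * Q h) /\
  (exists K : R, forall g, Ltau g -> `|Q g| <= K * tau_norm g).

Definition in_calQ (Q : ('rV[R]_q -> R) -> R) : Prop :=
  (in_dual Q /\
   (forall g, Ltau g -> (forall x, Z x -> 0 <= g x) -> 0 <= Q g) /\
   Q (fun _ => 1) = 1)
  \/
  (exists (p : nat) (z : 'I_p -> 'rV[R]_q), (0 < p)%N /\
     (forall i, Z (z i)) /\
     forall g, Q g = (p%:R)^-1 * \sum_(i < p) g (z i)).

End Orlicz.

(* Main.v *)
Require Import Defs.
From HB Require Import structures.
From mathcomp Require Import all_boot all_order all_algebra.
From mathcomp Require Import all_classical all_reals all_analysis.
From mathcomp Require Import ring lra measurable_realfun.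
Import Order.TTheory GRing.Theory Num.Theory.
Import numFieldNormedType.Exports.
Local Open Scope classical_set_scope.
Local Open Scope ring_scope.

Section TauLemmas.
Variable R : realType.

Lemma tau0 : tau (0 : R) = 0.
Proof. by rewrite /tau normr0 expR0 subr0 subrr. Qed.

Lemma tau_ge0 (s : R) : 0 <= tau s.
Proof.
rewrite /tau subr_ge0 lerBrDr; exact: expR_ge1Dx.
Qed.

Lemma tau_mono (s t : R) : 0 <= s -> s <= t -> tau s <= tau t.
Proof.
move=> s0 st; have t0 : 0 <= t by apply: le_trans st.
rewrite /tau !ger0_norm //.
have h : expR s + (t - s) <= expR t.
  have -> : expR t = expR s * expR (t - s) by rewrite -expRD addrC subrK.
  have e1 := expR_ge1Dx (t - s).
  have es1 : 1 <= expR s by rewrite -expR0 ler_expR.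
  have ts0 : 0 <= t - s by rewrite subr_ge0.
  apply: le_trans (ler_wpM2l (expR_ge0 s) e1).
  rewrite mulrDr mulr1 lerD2l.
  by rewrite -{1}(mul1r (t - s)) ler_wpM2r.
move: h; set a := expR s; set b := expR t; lra.
Qed.

Lemma tau_cont : continuous (@tau R).
Proof.
move=> x; rewrite /tau.
apply: cvgB; last exact: cvg_cst.
apply: cvgB; last exact: norm_continuous.
apply: (@continuous_comp _ _ _ (@Num.norm _ R) expR); first exact: norm_continuous.
exact: continuous_expR.
Qed.

Lemma tau_meas : measurable_fun setT (@tau R).
Proof. exact: continuous_measurable_fun tau_cont. Qed.

End TauLemmas.
Section Meas.
Variables (R : realType) (q : nat).
Local Notation V := 'rV[R]_q.
Local Notation T := (borelRq R q).

Lemma open_measT (G : set V) : open G -> measurable (G : set T).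
Proof. by move=> oG; apply: sub_gen_smallest. Qed.

Lemma closed_measT (F : set V) : closed F -> measurable (F : set T).
Proof.
move=> cF; rewrite -(setCK F); apply: measurableC; apply: open_measT.
exact: closed_openC.
Qed.

Lemma meas_cont (Z : set V) (f : V -> R) : measurable (Z : set T) ->
  {within Z, continuous f} -> measurable_fun (Z : set T) f.
Proof.
move=> mZ /continuousP cf; apply: (measurability _ (RGenOpens.measurableE R)).
move=> _ [_ [a [b ->] <-]].
have : open (f @^-1` `]a, b[%classic : set (subspace Z)) by exact/cf/interval_open.
move=> /open_subspaceP [W oW WZ].
rewrite setIC -WZ.

apply: measurableI => //; exact: open_measT.
Qed.

End Meas.

Section Reg.
Variables (R : realType) (q : nat).
Local Notation V := 'rV[R]_q.
Local Notation T := (borelRq R q).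
Variable mu : probability T R.

Lemma mu_fin (A : set T) : measurable A -> (mu A < +oo)%E.
Proof.
move=> mA; apply: (le_lt_trans (probability_le1 mu mA)); exact: ltey.
Qed.

Lemma dec_small (S : nat -> set T) : (forall n, measurable (S n)) ->
  nonincreasing_seq S -> \bigcap_n S n = set0 ->
  forall e : R, 0 < e -> exists N, (mu (S N) <= e%:E)%E.
Proof.
move=> mS niS capS e e0.
have cv := nonincreasing_cvg_mu (mu_fin _ (mS 0%N)) mS (bigcapT_measurable mS) niS.
rewrite capS measure0 in cv.
have [fin cvf] := (fine_cvgP _ _).1 cv.
have lt := cvgr_lt _ cvf _ e0.
near \oo => N; exists N.
have : (mu (S N)) \is a fin_num by near: N; exact: fin.
have : fine (mu (S N)) < e by near: N; exact: lt.
move=> h1 h2; rewrite -(fineK h2) lee_fin; exact: ltW.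
Unshelve. all: by end_near. Qed.


Lemma sum_small (G : nat -> set T) (e : R) : 0 <= e ->
  (forall n, measurable (G n)) ->
  (forall n, (mu (G n) <= (e / (2 ^ n.+1)%:R)%:E)%E) ->
  (mu (\bigcup_n G n) <= e%:E)%E.
Proof.
move=> e0 mG hG.
have h : (mu (\bigcup_n G n) <= \sum_(0 <= n <oo) mu (G n))%E.
  by apply: measure_sigma_subadditive => //; exact: bigcupT_measurable.
apply: le_trans h _.
apply: le_trans (epsilon_trick0 predT e0).
apply: lee_nneseries => // i _ _; exact: measure_ge0.
Qed.

Definition icl (A : set T) := forall e : R, 0 < e ->
  exists F : set T, [/\ closed (F : set V), F `<=` A & (mu (A `\` F) <= e%:E)%E].

Definition good (A : set T) := [/\ measurable A, icl A & icl (~` A)].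

Lemma good0 : good set0.
Proof.
split => //.
- move=> e e0; exists set0; split => //; first exact: closed0.
  by rewrite setDv measure0 lee_fin ltW.
- move=> e e0; exists setT; split => //; first by rewrite setC0.
  by rewrite setC0 setDv measure0 lee_fin ltW.
Qed.

Lemma goodC (A : set T) : good A -> good (setT `\` A).
Proof.
by case=> mA iA iC; rewrite setTD; split => //; [exact: measurableC|rewrite setCK].
Qed.


Lemma goodU (A : nat -> set T) : (forall n, good (A n)) -> good (\bigcup_n A n).
Proof.
move=> gA.
have mA : forall n, measurable (A n) by move=> n; case: (gA n).
have iA : forall n, icl (A n) by move=> n; case: (gA n).
have iC : forall n, icl (~` A n) by move=> n; case: (gA n).
have mU : measurable (\bigcup_n A n) by exact: bigcupT_measurable.
have eps_pos : forall e : R, 0 < e -> forall n : nat, 0 < e / (2 ^ n.+1)%:R.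
  by move=> e e0 n; rewrite divr_gt0 // ltr0n expn_gt0.
split => //.
- move=> e e0.
  pose B N := \big[setU/set0]_(n < N) A n.
  have mB N : measurable (B N) by apply: bigsetU_measurable => n _; exact: mA.
  pose S N := \bigcup_n A n `\` B N.
  have mS N : measurable (S N) by exact: measurableD.
  have niS : nonincreasing_seq S.
    apply/nonincreasing_seqP => n; rewrite subsetEset; apply: setDS.
    by rewrite /B big_ord_recr /=; exact: subsetUl.
  have capS : \bigcap_n S n = set0.
    apply/seteqP; split => x // Sx.
    have [[n _ Anx] _] := Sx 0%N I.
    have [_ nB] := Sx n.+1 I; apply: nB.
    by rewrite /B big_ord_recr /=; right.
  have e20 : 0 < e / 2 by rewrite divr_gt0.
  have [N HN] := dec_small _ mS niS capS _ e20.
  have : forall n, exists F : set T, [/\ closed (F : set V), F `<=` A n &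
      (mu (A n `\` F) <= (e / 2 / (2 ^ n.+1)%:R)%:E)%E].
    by move=> n; apply: iA; exact: eps_pos.
  move=> /choice [F HF].
  have mF n : measurable (F n) by case: (HF n) => cF _ _; exact: closed_measT.
  exists (\big[setU/set0]_(n < N) F n); split.
  + by apply: closed_bigsetU => n _; case: (HF n).
  + move=> x; rewrite -bigcup_mkord => -[n _ Fnx]; exists n => //.
    by case: (HF n) => _ + _; apply.
  + have mG : measurable (\bigcup_n (A n `\` F n)).
      by apply: bigcupT_measurable => n; exact: measurableD.
    apply: (@le_trans _ _ (mu (S N `|` \bigcup_n (A n `\` F n)))).
      apply: le_measure; rewrite ?inE.
      * apply: measurableD => //; exact: bigsetU_measurable.
      * exact: measurableU.
      * move=> x [Ux nFx]; have [BNx | nBx] := pselect (B N x); last by left.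
        right; move: BNx; rewrite /B -bigcup_mkord => -[n /= nN Anx].
        exists n => //; split => // Fnx; apply: nFx.
        by rewrite -bigcup_mkord; exists n.
    apply: le_trans (measureU2 mu (mS N) mG) _.
    rewrite [e in (_ <= e%:E)%E](splitr e) EFinD; apply: leeD => //.
    apply: sum_small => //; first exact: ltW.
      by move=> n; exact: measurableD.
    by move=> n; case: (HF n).
- move=> e e0.
  have : forall n, exists F : set T, [/\ closed (F : set V), F `<=` ~` A n &
      (mu (~` A n `\` F) <= (e / (2 ^ n.+1)%:R)%:E)%E].
    by move=> n; apply: iC; exact: eps_pos.
  move=> /choice [F HF].
  have mF n : measurable (F n) by case: (HF n) => cF _ _; exact: closed_measT.
  exists (\bigcap_n F n); split.
  + by apply: closed_bigI => n _; case: (HF n).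
  + move=> x Fx [n _ Anx]; have [_ sub _] := HF n; exact: (sub x (Fx n I) Anx).
  + apply: (@le_trans _ _ (mu (\bigcup_n (~` A n `\` F n)))).
      apply: le_measure; rewrite ?inE.
      * apply: measurableD; first exact: measurableC.
        exact: bigcapT_measurable.
      * apply: bigcupT_measurable => n; apply: measurableD => //.
        exact: measurableC.
      * move=> x [nUx nFx].
        have [n nFnx] : exists n, ~ F n x.
          by apply/existsNP => allF; apply: nFx => n _; exact: allF.
        exists n => //; split => // Anx; apply: nUx; by exists n.
    apply: sum_small => //; first exact: ltW.
      by move=> n; apply: measurableD => //; exact: measurableC.
    by move=> n; case: (HF n).
Qed.


Lemma open_good (G : set V) : open G -> good G.
Proof.
move=> oG; split; first exact: open_measT.
- move=> e e0.
  pose r (n : nat) : R := (n.+1%:R)^-1.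
  have r0 n : 0 < r n by rewrite invr_gt0 ltr0n.
  pose Fn n : set T := \bigcap_(y in ~` G) ~` ball y (r n).
  have cF n : closed (Fn n : set V).
    by apply: closed_bigI => y _; apply: open_closedC; exact: ball_open.
  have mF n : measurable (Fn n) by exact: closed_measT.
  have FG n : Fn n `<=` G.
    move=> x Fx; apply: contrapT => nGx; exact: (Fx x nGx (ballxx x (r0 n))).
  pose S n := (G : set T) `\` Fn n.
  have mS n : measurable (S n) by apply: measurableD => //; exact: open_measT.
  have niS : nonincreasing_seq S.
    apply/nonincreasing_seqP => n; rewrite subsetEset; apply: setDS.
    move=> x Fx y nGy bxy; apply: (Fx y nGy); apply: le_ball bxy.
    by rewrite /r lef_pV2 ?posrE ?ltr0n // ler_nat.
  have capS : \bigcap_n S n = set0.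
    apply/seteqP; split => x // Sx.
    have [Gx _] := Sx 0%N I.
    have /nbhs_ballP [eps eps0 bG] := open_nbhs_nbhs (conj oG Gx).
    pose n := Num.truncn (eps^-1).
    have rn : r n < eps.
      rewrite /r -[eps]invrK ltf_pV2 ?posrE ?invr_gt0 ?ltr0n //.
      exact: Num.Theory.truncnS_gt.
    have [_ nF] := Sx n I; apply: nF => y nGy bxy; apply: nGy; apply: bG.
    by apply: (@le_ball _ _ (x : V) (r n) eps (ltW rn)); exact: ball_sym.
  have [N HN] := dec_small _ mS niS capS _ e0.
  by exists (Fn N); split.
- move=> e e0; exists (~` G); split => //.
    by apply: open_closedC.
  by rewrite setDv measure0 lee_fin ltW.
Qed.

Lemma good_sigma : sigma_algebra setT good.
Proof.
split; [exact: good0 | exact: goodC | exact: goodU].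
Qed.

Lemma meas_good (A : set T) : measurable A -> good A.
Proof.
move=> mA; apply: (smallest_sub good_sigma _ mA).
by move=> G oG; apply: open_good.
Qed.


Lemma compact_approx (Z : set T) : measurable Z -> forall e : R, 0 < e ->
  exists C : set V, [/\ compact C, C `<=` Z & (mu (Z `\` (C : set T)) <= e%:E)%E].
Proof.
move=> mZ e e0; have e20 : 0 < e / 2 by rewrite divr_gt0.
have [_ iZ _] := meas_good _ mZ.
have [F [cF FZ hF]] := iZ _ e20.
pose S (n : nat) : set T := [set x : V | n%:R < `|x|].
have oS n : open (S n : set V).
  exact: ((continuousP _).1 (@norm_continuous R V) _ (@open_gt R n%:R)).
have mS n : measurable (S n) by exact: open_measT.
have niS : nonincreasing_seq S.
  apply/nonincreasing_seqP => n; rewrite subsetEset => x /= h.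
  by apply: lt_trans h; rewrite ltr_nat.
have capS : \bigcap_n S n = set0.
  apply/seteqP; split => x // Sx.
  have := Sx (Num.truncn `|x : V|).+1 I; rewrite /S /= => h.
  by have := Num.Theory.truncnS_gt `|x : V|; rewrite ltNge (ltW h).
have [N HN] := dec_small _ mS niS capS _ e20.
have mF : measurable F by exact: closed_measT.
exists ((F : set V) `&` ~` (S N : set V)); split.
- apply: bounded_closed_compact.
    exists N%:R; split; first exact: num_real.
    move=> M NM x [_ Sx]; apply: ltW; apply: le_lt_trans NM.
    by rewrite leNgt; apply/negP.
  by apply: closedI => //; exact: open_closedC.
- by move=> x [Fx _]; exact: FZ.
- apply: (@le_trans _ _ (mu ((Z `\` F) `|` S N))).
    apply: le_measure; rewrite ?inE.
    + apply: measurableD => //; apply: measurableI => //; exact: measurableC.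
    + by apply: measurableU => //; exact: measurableD.
    + move=> x [Zx nC]; have [SNx|nSNx] := pselect (S N x); first by right.
      by left; split => // Fx; apply: nC.
  apply: le_trans (measureU2 mu (measurableD mZ mF) (mS N)) _.
  rewrite [e in (_ <= e%:E)%E](splitr e) EFinD; exact: leeD.
Qed.

End Reg.

Section Aux.
Variables (R : realType) (q : nat) (Z : set 'rV[R]_q)
  (Pstar : probability (borelRq R q) R).
Local Notation T := (borelRq R q).

Lemma meas_tau (g : 'rV[R]_q -> R) (a : R) : meas Z g ->
  measurable_fun (Z : set T) (fun x => (tau (g x / a))%:E).
Proof.
move=> mg; apply/measurable_EFinP.
apply: (measurableT_comp (@tau_meas R)).
by apply: measurable_funM => //; exact: measurable_cst.
Qed.

End Aux.

Theorem lemmaE1 (R : realType) (q : nat) (Z : set 'rV[R]_q)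
  (Pstar : probability (borelRq R q) R)
  (HZ : measurable (Z : set (borelRq R q)))
  (HPZ : Pstar (~` (Z : set (borelRq R q))) = 0%E)
  (psi : R -> R)
  (psi_ge0 : forall x, 0 <= x -> 0 <= psi x)
  (psi_incr : {in `[0, +oo[ &, {homo psi : x y / x <= y}})
  (psi_superlin : psi x / x @[x --> +oo] --> +oo)
  (f : 'rV[R]_q -> R)
  (f_ge0 : forall z, Z z -> 0 <= f z)
  (f_cont : {within Z, continuous f})
  (f_coercive : forall M : R, exists r : R,
      forall z, Z z -> r < `|z| -> M <= f z)
  (psif_L : Ltau Z Pstar (fun z => psi (f z))) :
  Mtau Z Pstar f /\
  forall (eps : R), 0 < eps ->
  forall Q : ('rV[R]_q -> R) -> R, in_calQ Z Pstar Q ->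
  exists C : set 'rV[R]_q,
    compact C /\ C `<=` Z /\
    Q (fun z => f z * \1_(~` C) z) < eps.
Proof.
have mf : meas Z f := @meas_cont R q Z f HZ f_cont.
have Mt : Mtau Z Pstar f.
  split => // a a0.
  case: psif_L => mpsi [a1 [a10 fin1]].
  have [M [Mreal HM]] := (cvgryPge _).1 psi_superlin (a1 / a).
  pose M1 : R := `|M| + 1.
  have M10 : 0 < M1 by rewrite /M1 ltr_wpDl.
  have MM1 : M < M1 by rewrite /M1 (le_lt_trans (ler_norm M)) // ltrDl.
  have bnd : forall x, Z x -> tau (f x / a) <= tau (M1 / a) + tau (psi (f x) / a1).
    move=> x Zx; have fx0 := f_ge0 x Zx.
    have [fM|fM] := leP M1 (f x).
    - suff : tau (f x / a) <= tau (psi (f x) / a1).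
        by move: (tau_ge0 _ (M1 / a)); lra.
      apply: tau_mono; first by rewrite divr_ge0 // ltW.
      have fx1 : 0 < f x by apply: lt_le_trans fM.
      have := HM (f x) (lt_le_trans MM1 fM).
      rewrite ler_pdivlMr // => h.
      rewrite ler_pdivrMr // mulrAC ler_pdivlMr //.
      have e : f x * a1 = a1 / a * f x * a by field; rewrite gt_eqF.
      by rewrite e; apply: ler_wpM2r => //; exact: ltW.
    - suff : tau (f x / a) <= tau (M1 / a).
        by move=> h1; apply: le_trans h1 _; rewrite lerDl; exact: tau_ge0.
      apply: tau_mono; first by rewrite divr_ge0 // ltW.
      by rewrite ler_pM2r ?invr_gt0 // ltW.
  rewrite /Ptau.
  apply: le_lt_trans (ge0_le_integral Pstar HZ
     (f2 := fun x => (tau (M1 / a))%:E + (tau (psi (f x) / a1))%:E) _ _ _ _) _.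
  - by move=> x _; rewrite lee_fin tau_ge0.
  - exact: meas_tau.
  - apply: emeasurable_funD; first exact: measurable_cst.
    exact: meas_tau.
  - by move=> x Zx; rewrite -EFinD lee_fin bnd.
  rewrite ge0_integralD //.
  - rewrite integral_cst //; apply: lte_add_pinfty => //.
    apply: lte_mul_pinfty => //; first by rewrite lee_fin tau_ge0.
    apply: le_lt_trans (probability_le1 Pstar HZ) _; exact: ltey.
  - by move=> x _; rewrite lee_fin tau_ge0.
  - by move=> x _; rewrite lee_fin tau_ge0.
  - exact: meas_tau.
split => //.
move=> eps eps0 Q [[[lin [K HK]] [pos Q1]] | [p [z [p0 [zZ Qe]]]]].
- pose dl := eps / (`|K| + 1).
  have K10 : 0 < `|K| + 1 by have := normr_ge0 K; lra.
  have dl0 : 0 < dl by rewrite divr_gt0.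
  pose h x := tau (f x / dl).
  have hfin : (Ptau Z Pstar f dl < +oo)%E := Mt.2 dl dl0.
  have mh : measurable_fun (Z : set (borelRq R q)) (fun x => (h x)%:E).
    exact: meas_tau.
  have intZ : Pstar.-integrable (Z : set (borelRq R q)) (fun x => (h x)%:E).
    apply/integrableP; split => //.
    rewrite (eq_integral (fun x : borelRq R q => (h x)%:E)) //.
    by move=> x _; rewrite gee0_abs // lee_fin tau_ge0.
  pose k := h \_ Z.
  have intk : Pstar.-integrable setT (EFin \o k).
    have := (integrable_mkcond _ HZ).1 intZ.
    congr (_.-integrable _ _); apply/funext => x /=.
    by rewrite /k !patchE; case: ifP.
  have [d0 [d00 Hd]] := integral_normr_continuous intk ltr01.
  have d020 : 0 < d0 / 2 by rewrite divr_gt0.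
  have [C [cC CZ muC]] := @compact_approx R q Pstar Z HZ _ d020.
  have mC : measurable (C : set (borelRq R q)).
    exact: (@closed_measT R q C (compact_closed (@norm_hausdorff _ _) cC)).
  have mZC : measurable ((Z : set (borelRq R q)) `\` C) by exact: measurableD.
  have ltC : (Pstar ((Z : set (borelRq R q)) `\` C) < d0%:E)%E.
    by apply: le_lt_trans muC _; rewrite lte_fin; lra.
  have HI := Hd _ mZC ltC.
  pose g := fun z => f z * \1_(~` C) z.
  have mg : meas Z g.
    apply: measurable_funM => //; apply: measurable_indic; exact: measurableC.
  have Pg : Ptau Z Pstar g dl = (\int[Pstar]_(x in (Z : set (borelRq R q)) `\` C) (`|k x|)%:E)%E.
    rewrite /Ptau setDE integral_mkcondr; apply: eq_integral => x /[!inE] Zx.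
    rewrite patchE; case: ifPn => xC.
    - by rewrite /g indicE xC mulr1 /k patchE (mem_set Zx) ger0_norm // tau_ge0.
    - by rewrite /g indicE (negbTE xC) mulr0 mul0r tau0.
  have intkC : Pstar.-integrable ((Z : set (borelRq R q)) `\` C) (fun x => (`|k x|)%:E).
    exact: integrableS (integrable_abse intk).
  have finI := integrable_fin_num mZC intkC.
  have Pg1 : (Ptau Z Pstar g dl < 1)%E.
    by rewrite Pg -(fineK finI) lte_fin.
  have Lg : Ltau Z Pstar g.
    split => //; exists dl; split => //; apply: lt_trans Pg1 _; exact: ltey.
  have hl : has_lbound [set a : R | 0 < a /\ (Ptau Z Pstar g a <= 1)%E].
    by exists 0 => a [a0 _]; exact: ltW.
  have Sdl : [set a : R | 0 < a /\ (Ptau Z Pstar g a <= 1)%E] dl.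
    by split => //; exact: ltW.
  have tn_le : tau_norm Z Pstar g <= dl by exact: (ge_inf hl Sdl).
  have tn_ge : 0 <= tau_norm Z Pstar g.
    apply: lb_le_inf; first by exists dl.
    by move=> a [a0 _]; exact: ltW.
  exists C; split => //; split => //.
  have hq := HK g Lg.
  have q1 := ler_norm (Q g).
  have e1 : K * tau_norm Z Pstar g <= `|K| * dl.
    apply: le_trans (_ : `|K| * tau_norm Z Pstar g <= _).
      by apply: ler_wpM2r => //; exact: ler_norm.
    by apply: ler_wpM2l => //; exact: normr_ge0.
  have e2 : `|K| * dl = eps - dl by rewrite /dl; field; rewrite gt_eqF.
  lra.
- exists (range z); split.
    apply: finite_compact; apply: finite_image; exact: finite_finset.
  split; first by move=> _ [i _ <-]; exact: zZ.
  rewrite Qe big1 ?mulr0 // => i _.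
  rewrite indicE memNset ?mulr0 //.
  by move=> /(_ (ex_intro2 _ _ i I erefl)).
Qed.
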